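(* Let $v$ and $v'$ be distinct true twin vertices of a graph $G$ and let $G'=G-v'$. Then $\tilde\gamma_{gr}^{\times 2}(G')\le\tilde\gamma_{gr}^{\times 2}(G)\le\tilde\gamma_{gr}^{\times 2}(G')+1$. Moreover, $\tilde\gamma_{gr}^{\times 2}(G)=\tilde\gamma_{gr}^{\times 2}(G')+1$ if and only if there exists an MDNS $S'$ of $G'$ such that $v\in\widehat{S'}$, $N_{S'}^1[v]\neq\emptyset$, and $N_{S'}[x]\setminus N_{S'}^1[v]\neq\emptyset$ for every $x\in\widehat{S'}\setminus\{v\}$.
   Context: Graphs are finite, simple, undirected; $N[v]$ is the closed neighborhood; $v,v'$ are true twins if $N[v]=N[v']$. A sequence $S=(v_1,\dots,v_k)$ of distinct vertices is a double neighborhood sequence (DNS) if for each $i$ some $u\in N[v_i]$ satisfies $|\{j<i: u\in N[v_j]\}|\le 1$. An MDNS is a DNS of maximum length; $\tilde\gamma_{gr}^{\times 2}(G)$ is that length. $\widehat S$ is the set of vertices of $S$. For a DNS $S=(v_1,\dots,v_k)$: $N_S^1[v_i]=N[v_i]\setminus\bigcup_{j<i}N[v_j]$; $N_S^2[v_i]=\{w\in N[v_i]: |\{j<i: w\in N[v_j]\}|=1\}$; $N_S[v_i]=N_S^1[v_i]\cup N_S^2[v_i]$. *)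

(* Defs.v *)
From mathcomp Require Import all_boot.
Set Implicit Arguments. Unset Strict Implicit. Unset Printing Implicit Defensive.

(* The graph G is (e, setT); the vertex-deleted graph G - v' is the induced
   subgraph (e, setT :\ v'). *)

Definition simple_graph (T : finType) (e : rel T) :=
  symmetric e /\ irreflexive e.

Section DNS.
Variables (T : finType) (e : rel T) (V : {set T}).

Definition cnbh (x : T) : {set T} := [set u in V | (u == x) || e x u].

(* number of j < i with u in N[v_j], given the prefix (v_1..v_{i-1}) *)
Definition ncov (prefix : seq T) (u : T) : nat :=
  count (fun y => u \in cnbh y) prefix.

Definition dns_step (prefix : seq T) (x : T) : bool :=
  [exists u in cnbh x, ncov prefix u <= 1].

Definition is_dns (s : seq T) : bool :=
  [&& uniq s, all (fun x => x \in V) s &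
      [forall i : 'I_(size s), dns_step (take i s) (tnth (in_tuple s) i)]].

Definition gr2 : nat :=
  \max_(n < #|T|.+1 | [exists t : n.-tuple T, is_dns t]) n.

Definition is_mdns (s : seq T) : bool := is_dns s && (size s == gr2).

Definition NS1 (s : seq T) (x : T) : {set T} :=
  [set w in cnbh x | ncov (take (index x s) s) w == 0].
Definition NS2 (s : seq T) (x : T) : {set T} :=
  [set w in cnbh x | ncov (take (index x s) s) w == 1].
Definition NS (s : seq T) (x : T) : {set T} := NS1 s x :|: NS2 s x.

End DNS.

(* Main.v *)
Require Import Defs.
From mathcomp Require Import all_boot zify.
Set Implicit Arguments. Unset Strict Implicit. Unset Printing Implicit Defensive.


Section Gen.
Variables (T : finType) (e : rel T).

Definition pre (s : seq T) (y : T) := take (index y s) s.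

Lemma dnsI (V : {set T}) s : is_dns e V s =
  [&& uniq s, all (fun x => x \in V) s & all (fun y => dns_step e V (pre s y) y) s].
Proof.
rewrite /is_dns; case Hu: (uniq s) => //=; case: (all _ s) => //=.
apply/forallP/allP => [H y ys|H i].
  have := H (Ordinal (etrans (index_mem y s) ys)).
  by rewrite (tnth_nth y) /= nth_index.
rewrite (tnth_nth (tnth (in_tuple s) i)) /=.
have ii := ltn_ord i.
have := H (nth (tnth (in_tuple s) i) s i) (mem_nth _ ii).
by rewrite /pre index_uniq.
Qed.

Lemma preL a b y : y \in a -> pre (a ++ b) y = pre a y.
Proof. by move=> ya; rewrite /pre index_cat ya take_cat index_mem ya. Qed.

Lemma preR a b y : y \notin a -> pre (a ++ b) y = a ++ pre b y.
Proof.
move=> ya; rewrite /pre index_cat (negbTE ya) take_cat ltnNge leq_addr /=.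
by rewrite addKn.
Qed.

Lemma pre_cons_eq y b : pre (y :: b) y = [::].
Proof. by rewrite /pre /= eqxx. Qed.

Lemma pre_cons_neq x y b : y != x -> pre (x :: b) y = x :: pre b y.
Proof. by move=> yx; rewrite /pre /= eq_sym (negbTE yx). Qed.

Lemma pre_filter (P : pred T) s y : P y ->
  pre (filter P s) y = filter P (pre s y).
Proof.
rewrite /pre => Py; elim: s => //= z s IH.
case: (eqVneq z y) => [->|zy]; first by rewrite Py /= eqxx.
case Pz: (P z) => /=; rewrite ?(negbTE zy) ?eq_sym ?(negbTE zy) /= ?Pz ?IH //.
Qed.

Lemma ncov_cat (V : {set T}) a b u : ncov e V (a ++ b) u = ncov e V a u + ncov e V b u.
Proof. by rewrite /ncov count_cat. Qed.

Lemma ncov_cons (V : {set T}) x b u : ncov e V (x :: b) u = (u \in cnbh e V x) + ncov e V b u.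
Proof. by []. Qed.

Lemma ncov_filter (V : {set T}) (P : pred T) l u : ncov e V (filter P l) u <= ncov e V l u.
Proof. by rewrite /ncov count_filter; apply: sub_count => z /andP[]. Qed.

Lemma in_cnbhV (V : {set T}) u y : (u \in cnbh e V y) = (u \in V) && (u \in cnbh e [set: T] y).
Proof. by rewrite !inE. Qed.

Lemma ncovVG (V : {set T}) l u : u \in V -> ncov e V l u = ncov e [set: T] l u.
Proof. by move=> uV; apply: eq_count => z; rewrite in_cnbhV uV. Qed.


Lemma dns_nil (V : {set T}) : is_dns e V [::].
Proof. by rewrite dnsI. Qed.

Lemma dns_filter (V : {set T}) (P : pred T) s : is_dns e V s -> is_dns e V (filter P s).
Proof.
rewrite !dnsI => /and3P[u a d]; rewrite filter_uniq //=.
apply/andP; split; first by rewrite all_filter; apply: sub_all a => z /= zV; apply/implyP.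
apply/allP => y; rewrite mem_filter => /andP[Py ys].
rewrite pre_filter //; have /existsP[w /andP[wN wc]] := allP d y ys.
apply/existsP; exists w; rewrite wN /=; exact: leq_trans (ncov_filter _ _ _ _) wc.
Qed.

Lemma gr2_ge (V : {set T}) s : is_dns e V s -> size s <= gr2 e V.
Proof.
move=> H; have := H; rewrite dnsI => /and3P[u _ _].
have lt : size s < #|T|.+1 by rewrite ltnS -(card_uniqP u) max_card.
apply: (@leq_bigmax_cond _ _ (fun i : 'I_#|T|.+1 => nat_of_ord i) (Ordinal lt)).
by apply/existsP; exists (in_tuple s).
Qed.

Lemma gr2_wit (V : {set T}) : exists s, is_dns e V s /\ size s = gr2 e V.
Proof.
have P0 : [exists t : (@ord0 #|T|).-tuple T, is_dns e V t].
  by apply/existsP; exists [tuple]; exact: dns_nil.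
rewrite /gr2 (bigmax_eq_arg ord0) //.
case: arg_maxnP => // i /existsP[t Ht] _.
by exists t; rewrite size_tuple.
Qed.

Lemma NS1_mem (V : {set T}) s x w :
  (w \in NS1 e V s x) = (w \in cnbh e V x) && (ncov e V (pre s x) w == 0).
Proof. by rewrite inE. Qed.

Lemma NS_mem (V : {set T}) s x w :
  (w \in NS e V s x) = (w \in cnbh e V x) && (ncov e V (pre s x) w <= 1).
Proof.
rewrite /NS inE !NS1_mem; rewrite /NS2 inE -/(pre s x).
case: (w \in cnbh e V x) => //=.
by case: (ncov e V (pre s x) w) => [|[|n]].
Qed.

Lemma uniq_cat_notin (a b : seq T) y : uniq (a ++ b) -> y \in b -> y \notin a.
Proof.
rewrite cat_uniq => /and3P[_ h _] yb; apply: contra h => ya; apply/hasP; by exists y.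
Qed.

Lemma filter_notin (x : T) l : x \notin l -> filter (predC1 x) l = l.
Proof.
elim: l => //= z l IH; rewrite in_cons negb_or => /andP[h1 h2].
by rewrite eq_sym h1 IH.
Qed.

Lemma two_split (x y : T) s : x != y -> x \in s -> y \in s -> exists a b c,
  s = a ++ x :: b ++ y :: c \/ s = a ++ y :: b ++ x :: c.
Proof.
move=> xy; elim: s => //= z s IH; rewrite !in_cons.
case: (eqVneq x z) => [<-|xz] /=.
  move=> _; rewrite eq_sym (negbTE xy) /= => /splitPr[b c].
  by exists [::], b, c; left.
case: (eqVneq y z) => [<-|yz] /=.
  move=> /splitPr[b c] _; by exists [::], b, c; right.
move=> xs ys; have [a [b [c [->|->]]]] := IH xs ys.
  by exists (z :: a), b, c; left.
by exists (z :: a), b, c; right.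
Qed.

End Gen.


Section Tw.
Variables (T : finType) (e : rel T) (v v' : T).
Hypothesis esym : symmetric e.
Hypothesis vv' : v != v'.
Hypothesis Htw : cnbh e [set: T] v = cnbh e [set: T] v'.
Local Notation G := [set: T].
Local Notation G' := (G :\ v').

Lemma cnbh_sym u y : (u \in cnbh e G y) = (y \in cnbh e G u).
Proof. by rewrite !inE eq_sym esym. Qed.

Lemma twin_mem y : (v \in cnbh e G y) = (v' \in cnbh e G y).
Proof. by rewrite cnbh_sym Htw -cnbh_sym. Qed.

Lemma ncov_twin l : ncov e G l v = ncov e G l v'.
Proof. by apply: eq_count => z; rewrite /= twin_mem. Qed.

Lemma step_repl p y : dns_step e G p y ->
  exists u, [/\ u != v', u \in cnbh e G y & ncov e G p u <= 1].
Proof.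
case/existsP => u /andP[uy uc]; case: (eqVneq u v') => [Eu|nu]; last by exists u.
subst u; exists v; split => //; first by rewrite twin_mem.
by rewrite ncov_twin.
Qed.

Lemma dns_G'G s : is_dns e G' s -> is_dns e G s.
Proof.
rewrite !dnsI => /and3P[u _ d]; rewrite u /=; apply/andP; split.
  by apply/allP => z _; rewrite in_setT.
apply/allP => y ys; have /existsP[w /andP[wN wc]] := allP d y ys.
apply/existsP; exists w; move: wN; rewrite in_cnbhV => /andP[wV ->] /=.
by rewrite -(ncovVG _ _ wV).
Qed.

Lemma dns_GG' s : is_dns e G s -> v' \notin s -> is_dns e G' s.
Proof.
rewrite !dnsI => /and3P[u _ d] ns; rewrite u /=; apply/andP; split.
  apply/allP => z zs; rewrite !inE andbT; apply: contraNneq ns => <-; exact: zs.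
apply/allP => y ys; have [w [wv wN wc]] := step_repl (allP d y ys).
have wV : w \in G' by rewrite !inE wv.
by apply/existsP; exists w; rewrite in_cnbhV wV wN /= ncovVG.
Qed.

Definition sw z := if z == v then v' else if z == v' then v else z.

Lemma swK : involutive sw.
Proof.
move=> z; rewrite /sw; case: (eqVneq z v) => [->|zv]; first by rewrite eq_sym (negbTE vv') eqxx.
case: (eqVneq z v') => [->|zv']; first by rewrite eqxx.
by rewrite (negbTE zv) (negbTE zv').
Qed.

Lemma sw_inj : injective sw. Proof. exact: inv_inj swK. Qed.

Lemma cnbh_sw z : cnbh e G (sw z) = cnbh e G z.
Proof.
rewrite /sw; case: (eqVneq z v) => [->|zv]; first by rewrite Htw.
by case: (eqVneq z v') => [->|//]; rewrite Htw.
Qed.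

Lemma ncov_sw l u : ncov e G (map sw l) u = ncov e G l u.
Proof. by rewrite /ncov count_map; apply: eq_count => z /=; rewrite cnbh_sw. Qed.

Lemma dns_map s : is_dns e G s -> is_dns e G (map sw s).
Proof.
rewrite !dnsI => /and3P[u _ d]; rewrite (map_inj_uniq sw_inj) u /=; apply/andP; split.
  by apply/allP => z _; rewrite in_setT.
apply/allP => y' /mapP[y ys ->]; rewrite /pre index_map ?map_take; last exact: sw_inj.
have /existsP[w /andP[wN wc]] := allP d y ys.
apply/existsP; exists w; rewrite cnbh_sw wN /= -map_take ncov_sw; exact: wc.
Qed.

Lemma map_sw_id l : v \notin l -> v' \notin l -> map sw l = l.
Proof.
move=> h1 h2; rewrite -[RHS]map_id; apply/eq_in_map => z zl.
rewrite /sw; case: (eqVneq z v) => [Ez|_]; first by rewrite -Ez zl in h1.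
by case: (eqVneq z v') => [Ez|//]; rewrite -Ez zl in h2.
Qed.

Lemma step_G'G p y : dns_step e G' p y -> dns_step e G p y.
Proof.
case/existsP => w /andP[wN wc]; apply/existsP; exists w.
move: wN; rewrite in_cnbhV => /andP[wV ->] /=; by rewrite -(ncovVG _ _ wV).
Qed.

Lemma part1 : gr2 e G' <= gr2 e G.
Proof. have [s [hs <-]] := gr2_wit e G'; exact/gr2_ge/dns_G'G. Qed.

Lemma size_filter1 (x : T) s : uniq s -> size s <= (size (filter (predC1 x) s)).+1.
Proof.
move=> u; rewrite -(count_predC (pred1 x)) size_filter.
have := count_uniq_mem x u; rewrite -[count_mem x s]/(count (pred1 x) s) => ->.
rewrite addnC -addn1 leq_add2l; by case: (x \in s).
Qed.

Lemma part2 : gr2 e G <= (gr2 e G').+1.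
Proof.
have [s [hs <-]] := gr2_wit e G.
have u : uniq s by move: hs; rewrite dnsI => /and3P[].
apply: leq_trans (size_filter1 v' u) _; rewrite ltnS; apply: gr2_ge.
apply: dns_GG'; first exact: dns_filter.
by rewrite mem_filter /= eqxx.
Qed.

End Tw.


Section Fw.
Variables (T : finType) (e : rel T) (v v' : T).
Hypothesis esym : symmetric e.
Hypothesis vv' : v != v'.
Hypothesis Htw : cnbh e [set: T] v = cnbh e [set: T] v'.
Local Notation G := [set: T].
Local Notation G' := (G :\ v').

Lemma fwd_help a b c : is_dns e G (a ++ v :: b ++ v' :: c) ->
  size (a ++ v :: b ++ v' :: c) = (gr2 e G').+1 ->
  exists S' : seq T,
        [/\ is_mdns e G' S', v \in S', NS1 e G' S' v != set0 &
            forall x, x \in S' -> x != v ->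
              NS e G' S' x :\: NS1 e G' S' v != set0].
Proof.
set S1 := a ++ _ => hS hsz.
have u : uniq S1 by move: hS; rewrite dnsI => /and3P[].
have nv : (v == v') = false by apply/negbTE.
have nv' : (v' == v) = false by rewrite eq_sym.
have va : v \notin a by apply: (uniq_cat_notin u); rewrite in_cons eqxx.
have v'a : v' \notin a by apply: (uniq_cat_notin u); rewrite in_cons mem_cat in_cons eqxx !orbT.
have u2 : uniq (v :: b ++ v' :: c) by move: u; rewrite /S1 cat_uniq => /and3P[].
have u3 : uniq (b ++ v' :: c) by case/andP: u2.
have vbc : v \notin b ++ v' :: c by case/andP: u2.
have vb : v \notin b by move: vbc; rewrite mem_cat negb_or => /andP[].
have vc : v \notin c by move: vbc; rewrite mem_cat negb_or in_cons nv => /andP[].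
have v'b : v' \notin b by apply: (uniq_cat_notin u3); rewrite in_cons eqxx.
have v'c : v' \notin c by move: u3; rewrite cat_uniq => /and3P[_ _ /andP[]].
have v'v : v' != v by rewrite eq_sym.
set S' := a ++ b ++ v :: c.
have ES' : map (sw v v') (filter (predC1 v) S1) = S'.
  rewrite /S1 filter_cat /= eqxx /= filter_cat /= nv' /= !filter_notin //.
  rewrite !map_cat /= !map_sw_id //.
  by rewrite /sw eq_sym (negbTE vv') eqxx.
have v'S' : v' \notin S' by rewrite /S' !mem_cat in_cons (negbTE v'a) (negbTE v'b) (negbTE v'c) nv'.
have hS' : is_dns e G' S'.
  apply: (dns_GG' esym vv' Htw) => //; rewrite -ES'; apply: (dns_map vv' Htw); exact: dns_filter.
have uS' : uniq S' by move: hS'; rewrite dnsI => /and3P[].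
have hsz' : size S' = gr2 e G'.
  move: hsz; rewrite /S1 /S' !size_cat /= size_cat /= addnS; by case.
clear hsz.
have dS : forall y, y \in S1 -> dns_step e G (pre S1 y) y.
  by move: hS; rewrite dnsI => /and3P[_ _ /allP].
have dS' : forall y, y \in S' -> dns_step e G' (pre S' y) y.
  by move: hS'; rewrite dnsI => /and3P[_ _ /allP].
have vS1 : v \in S1 by rewrite /S1 mem_cat in_cons eqxx orbT.
have v'S1 : v' \in S1 by rewrite /S1 mem_cat in_cons mem_cat in_cons eqxx !orbT.
have pv : pre S' v = a ++ b by rewrite /S' preR // preR // pre_cons_eq cats0.
exists S'; split.
- by rewrite /is_mdns hS' hsz' /=.
- by rewrite /S' !mem_cat in_cons eqxx !orbT.
- have pv' : pre S1 v' = a ++ v :: b.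
    by rewrite /S1 preR // pre_cons_neq // preR // pre_cons_eq cats0.
  have [u0 [u0v' u0N u0c]] := step_repl esym vv' Htw (dS v' v'S1).
  rewrite -Htw in u0N; rewrite pv' ncov_cat ncov_cons u0N /nat_of_bool in u0c.
  have u0G' : u0 \in G' by rewrite !inE u0v'.
  apply/set0Pn; exists u0; rewrite NS1_mem pv in_cnbhV u0G' u0N /=.
  rewrite ncov_cat !(ncovVG _ _ u0G'); apply/eqP; clear -u0c; lia.
- move=> x xS' xv; case xab: (x \in a ++ b).
  have px : pre S' x = pre (a ++ b) x by rewrite /S' catA preL.
  have /existsP[w /andP[wN wc]] := dS' x xS'.
  apply/set0Pn; exists w; rewrite in_setD NS_mem wN wc !andbT NS1_mem pv negb_and.
  apply/orP; right; rewrite -lt0n /ncov -has_count; apply/hasP; exists x => //.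
have xc : x \in c by move: xS'; rewrite /S' catA mem_cat xab in_cons (negbTE xv).
have : x \notin a ++ b by rewrite xab.
rewrite mem_cat negb_or => /andP[xa xb].
have xv' : x != v' by apply: contraNneq v'c => <-.
have px : pre S' x = a ++ b ++ v :: pre c x by rewrite /S' preR // preR // pre_cons_neq.
have px1 : pre S1 x = a ++ v :: b ++ v' :: pre c x.
  by rewrite /S1 preR // pre_cons_neq // preR // pre_cons_neq.
have xS1 : x \in S1 by rewrite /S1 !(mem_cat, in_cons) xc !orbT.
have [w [wv' wN wc]] := step_repl esym vv' Htw (dS x xS1).
rewrite px1 !(ncov_cat, ncov_cons) -Htw in wc.
have wnv : (w \in cnbh e G v) = false.
  by move: wc; case: (w \in cnbh e G v); rewrite /nat_of_bool // => h; clear -h; lia.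
rewrite wnv /nat_of_bool in wc.
have wG' : w \in G' by rewrite !inE wv'.
apply/set0Pn; exists w; rewrite in_setD NS_mem NS1_mem px (in_cnbhV _ G' w x) (in_cnbhV _ G' w v) wG' wN wnv /=.
rewrite (ncovVG _ _ wG') !(ncov_cat, ncov_cons) wnv /nat_of_bool; clear -wc; lia.
Qed.

Lemma bwd_help p q : let S' := p ++ v :: q in
  is_dns e G' S' -> NS1 e G' S' v != set0 ->
  (forall x, x \in S' -> x != v -> NS e G' S' x :\: NS1 e G' S' v != set0) ->
  is_dns e G (p ++ v :: v' :: q).
Proof.
move=> S' hS' hN1 hN.
have nv' : (v' == v) = false by apply/negbTE; rewrite eq_sym.
have uS' : uniq S' by move: hS'; rewrite dnsI => /and3P[].
have dS' : forall y, y \in S' -> dns_step e G' (pre S' y) y.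
  by move: hS'; rewrite dnsI => /and3P[_ _ /allP].
have v'S' : v' \notin S'.
  move: hS'; rewrite dnsI => /and3P[_ /allP al _]; apply/negP => /al.
  by rewrite !inE eqxx.
have vp : v \notin p by apply: (uniq_cat_notin uS'); rewrite in_cons eqxx.
have v'p : v' \notin p by move: v'S'; rewrite /S' mem_cat negb_or => /andP[].
have v'q : v' \notin q by move: v'S'; rewrite /S' mem_cat in_cons nv' /= negb_or => /andP[].
have u2 : uniq (v :: q) by move: uS'; rewrite /S' cat_uniq => /and3P[].
have vq : v \notin q by case/andP: u2.
have pv : pre S' v = p by rewrite /S' preR // pre_cons_eq cats0.
set S := p ++ _.
have uS : uniq S.
  have -> : S = (p ++ [:: v]) ++ [:: v'] ++ q by rewrite /S -catA.
  rewrite uniq_catCA /= -catA /= -/S'.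
  by rewrite uS' andbT.
rewrite dnsI uS /=; apply/andP; split; first by apply/allP => z _; rewrite in_setT.
apply/allP => y; rewrite /S mem_cat !in_cons.
case/or4P => [yp|/eqP->|/eqP->|yq].
- rewrite preL //; apply: step_G'G.
  by have := dS' y; rewrite /S' preL // mem_cat yp; apply.
- rewrite preR // pre_cons_eq cats0; apply: step_G'G.
  by rewrite -pv; apply: dS'; rewrite /S' mem_cat in_cons eqxx orbT.
- rewrite preR // pre_cons_neq ?nv' // pre_cons_eq.
  case/set0Pn: hN1 => u0; rewrite NS1_mem pv => /andP[u0N u0c].
  move: u0N; rewrite in_cnbhV => /andP[u0G' u0N].
  apply/existsP; exists u0; rewrite -Htw u0N /= ncov_cat ncov_cons u0N.
  by rewrite -(ncovVG _ _ u0G') (eqP u0c).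
-   have yS' : y \in S' by rewrite /S' mem_cat in_cons yq !orbT.
  have yp : y \notin p by apply: (uniq_cat_notin uS'); rewrite in_cons yq orbT.
  have yv : y != v by apply: contraNneq vq => <-.
  have yv' : y != v' by apply: contraNneq v'q => <-.
  have py : pre S y = p ++ v :: v' :: pre q y by rewrite /S preR // !pre_cons_neq.
  have py' : pre S' y = p ++ v :: pre q y by rewrite /S' preR // !pre_cons_neq.
  case/set0Pn: (hN y yS' yv) => w; rewrite in_setD NS_mem NS1_mem pv py'.
  case/and3P => h1 wN wc.
  move: wN; rewrite in_cnbhV => /andP[wG' wN].
  apply/existsP; exists w; rewrite wN /= py.
  rewrite (ncovVG _ _ wG') ncov_cat ncov_cons in wc.
  rewrite ncov_cat !ncov_cons -Htw.
  case wv: (w \in cnbh e G v); rewrite wv /nat_of_bool in wc *; last by clear -wc; lia.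
  move: h1; rewrite in_cnbhV wG' wv /= (ncovVG _ _ wG') => h1.
  clear -h1 wc; lia.
Qed.

End Fw.


Theorem proposition5 (T : finType) (e : rel T) (v v' : T) :
  simple_graph e -> v != v' ->
  cnbh e [set: T] v = cnbh e [set: T] v' ->
  let G' := [set: T] :\ v' in
  [/\ gr2 e G' <= gr2 e [set: T],
      gr2 e [set: T] <= (gr2 e G').+1 &
      gr2 e [set: T] = (gr2 e G').+1 <->
      exists S' : seq T,
        [/\ is_mdns e G' S', v \in S', NS1 e G' S' v != set0 &
            forall x, x \in S' -> x != v ->
              NS e G' S' x :\: NS1 e G' S' v != set0]].
Proof.
move=> [esym _] vv' Htw G'.
have p2 := part2 esym vv' Htw.
split; first exact: part1; first exact: p2.
split.
- move=> H.
  have [S [hS hsz]] := gr2_wit e [set: T].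
  have v'S : v' \in S.
    apply/negPn/negP => nS; have := gr2_ge (dns_GG' esym vv' Htw hS nS).
    by rewrite hsz H ltnn.
  have swv : sw v v' v = v' by rewrite /sw eqxx.
  have swv' : sw v v' v' = v by rewrite /sw eq_sym (negbTE vv') eqxx.
  have vS : v \in S.
    apply/negPn/negP => nS.
    have hm := dns_map vv' Htw hS.
    have nm : v' \notin map (sw v v') S by rewrite -{1}swv (mem_map (sw_inj vv')).
    have := gr2_ge (dns_GG' esym vv' Htw hm nm).
    by rewrite size_map hsz H ltnn.
  have [a [b [c [ES|ES]]]] := two_split vv' vS v'S.
    by apply: (fwd_help esym vv' Htw (a := a) (b := b) (c := c)); rewrite -ES // hsz H.
  have hm := dns_map vv' Htw hS.
  rewrite ES map_cat /= map_cat /= swv swv' in hm.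
  apply: (fwd_help esym vv' Htw hm).
  rewrite -H -hsz ES !size_cat /= !size_cat /= !size_map //.
- case=> S' [/andP[hS' /eqP hsz] vS' hN1 hN].
  case/splitPr: vS' hS' hsz hN1 hN => p q hS' hsz hN1 hN.
  have := gr2_ge (bwd_help vv' Htw hS' hN1 hN).
  move=> h; apply/eqP; rewrite eqn_leq; apply/andP; split.
    by move: p2; rewrite -/G' -hsz.
  by rewrite -hsz; move: h; rewrite !size_cat /= addnS.
Qed.
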